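(* Let $n\ge s\ge 1$ and $\ell\ge 1$ be integers, and let $Q=\operatorname{diag}(Q_s, I_{n-s})$ be an $n\times n$ block diagonal matrix, where $Q_s$ is a rational orthogonal matrix of order $s$ and level $\ell$ each of whose entries is either $0$ or a non-integer rational number, and $I_{n-s}$ is the identity matrix of order $n-s$. Let $0<p<1$ and let $A$ be the adjacency matrix of a random graph $G\sim\mathcal{G}(n,p)$. Then $$\Pr\big(Q^\top A Q \text{ is an integer matrix}\big)\le \hat p^{\,\frac{s}{2\ell^4}\left(\frac{s}{2\ell^4}+n-s-1\right)},$$ where $\hat p=\max\{p,1-p\}$.
   Context: $\mathcal{G}(n,p)$ is the random graph on $n$ labelled vertices in which each possible edge is present independently with probability $p$; its adjacency matrix has $(i,j)$ entry $1$ if $ij$ is an edge and $0$ otherwise. The level of a rational matrix $M$ is the smallest positive integer $\ell$ such that $\ell M$ has integer entries. A rational orthogonal matrix is a matrix with rational entries satisfying $Q^\top Q=I$. *)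

(* Defs.v *)
From HB Require Import structures.
From mathcomp Require Import all_boot all_order all_algebra.
From mathcomp Require Import all_classical all_reals all_analysis.
Set Implicit Arguments. Unset Strict Implicit. Unset Printing Implicit Defensive.
Import Order.TTheory GRing.Theory Num.Theory.
Local Open Scope ring_scope.

Definition int_mx (m k : nat) (M : 'M[rat]_(m, k)) : bool :=
  [forall i, forall j, M i j \is a Num.int].

Definition is_level (m k : nat) (M : 'M[rat]_(m, k)) (l : nat) : Prop :=
  (0 < l)%N /\ int_mx (l%:R *: M) /\
  forall l' : nat, (0 < l')%N -> int_mx (l'%:R *: M) -> (l <= l')%N.

Definition rat_orthogonal (s : nat) (Q : 'M[rat]_s) : Prop := Q^T *m Q = 1%:M.

(* Unordered pairs {i,j}, i<j, of vertices of the labelled vertex set 'I_n. *)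
Definition vpair (n : nat) := {x : 'I_n * 'I_n | (x.1 < x.2)%N}.

Definition graph (n : nat) := {ffun vpair n -> bool}.

Definition is_edge (n : nat) (g : graph n) (i j : 'I_n) : bool :=
  match insub (i, j) : option (vpair n) with
  | Some e => g e
  | None => match insub (j, i) : option (vpair n) with
            | Some e => g e
            | None => false
            end
  end.

Definition adj_mx (n : nat) (g : graph n) : 'M[rat]_n :=
  \matrix_(i, j) (is_edge g i j)%:R.

Definition gnp_weight (R : realType) (n : nat) (p : R) (g : graph n) : R :=
  \prod_(e : vpair n) (if g e then p else 1 - p).

Definition gnp_prob (R : realType) (n : nat) (p : R) (E : pred (graph n)) : R :=
  \sum_(g : graph n | E g) gnp_weight p g.

(* Main.v *)
Require Import Defs.
From HB Require Import structures.
From mathcomp Require Import all_boot all_order all_algebra.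
From mathcomp Require Import all_classical all_reals all_analysis.
From mathcomp Require Import ring lra zify.
Import Order.TTheory GRing.Theory Num.Theory.
Local Open Scope ring_scope.
Set Implicit Arguments. Unset Strict Implicit. Unset Printing Implicit Defensive.
Section Prob.
Variables (R : realType) (n : nat) (p : R) (S : {set vpair n}).
Hypothesis p01 : 0 <= p <= 1.

Let w (b : bool) : R := if b then p else 1 - p.
Definition agree (g g2 : graph n) : bool := [forall e, (e \notin S) ==> (g2 e == g e)].

Lemma w_ge0 b : 0 <= w b.
Proof. by case/andP: p01 => h0 h1; rewrite /w; case: b => //; rewrite subr_ge0. Qed.

Lemma sum_weight : \sum_(g : graph n) gnp_weight p g = 1.
Proof.
rewrite /gnp_weight.
have := (bigA_distr_bigA (fun (e : vpair n) (b : bool) => w b)).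
move=> <-.
apply: big1 => e _; by rewrite big_bool /w /= addrCA subrr addr0.
Qed.

Lemma agree_sum (g : graph n) :
  \prod_(e | e \notin S) w (g e) =
  \sum_(g2 : graph n) (if agree g g2 then gnp_weight p g2 else 0).
Proof.
pose F := fun (e : vpair n) (b : bool) =>
  if e \in S then w b else (if b == g e then w b else 0).
have -> : \sum_(g2 : graph n) (if agree g g2 then gnp_weight p g2 else 0) =
          \sum_(g2 : graph n) \prod_e F e (g2 e).
  apply: eq_bigr => g2 _; rewrite /gnp_weight.
  case: ifP => ag.
    apply: eq_bigr => e _; rewrite /F; have := forallP ag e.
    by case: (e \in S) => //= /eqP ->; rewrite eqxx.
  move/negbT: ag; rewrite negb_forall => /existsP [e]; rewrite negb_imply => /andP [eS ne].
  rewrite (bigD1 e) //= /F (negbTE eS) (negbTE ne) mul0r //.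
rewrite -(bigA_distr_bigA F).
rewrite [RHS](bigID (mem S)) /= [X in _ = X * _]big1 ?mul1r; last first.
  by move=> e eS; rewrite big_bool /F eS /w /= addrCA subrr addr0.
apply: eq_bigr => e eS; rewrite big_bool /F (negbTE eS).
by case: (g e); rewrite /= ?addr0 ?add0r.
Qed.

Lemma prob_unique (P : pred (graph n)) :
  (forall g g', P g -> P g' -> (forall e, e \notin S -> g e = g' e) -> g = g') ->
  gnp_prob p P <= (Num.max p (1 - p)) ^+ #|S|.
Proof.
move=> uniq.
set q := Num.max p (1 - p).
have q0 : 0 <= q by rewrite le_max; case/andP: p01 => ->.
have step1 : forall g : graph n, gnp_weight p g <= q ^+ #|S| * \prod_(e | e \notin S) w (g e).
  move=> g; rewrite /gnp_weight (bigID (mem S)) /=.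
  apply: ler_wpM2r; first by apply: prodr_ge0 => e _; apply: w_ge0.
  rewrite -prodr_const; apply: ler_prod => e _; rewrite w_ge0 /w /q.
  by case: (g e); rewrite le_max lexx ?orbT.
rewrite /gnp_prob.
apply: (le_trans (y := \sum_(g | P g) q ^+ #|S| * \prod_(e | e \notin S) w (g e))).
  by apply: ler_sum => g _; apply: step1.
rewrite -mulr_sumr -[X in _ <= X]mulr1; apply: ler_wpM2l; first exact: exprn_ge0.
under eq_bigr => g _ do rewrite agree_sum.
rewrite exchange_big /= -sum_weight; apply: ler_sum => g2 _.
rewrite -big_mkcondr /=.
case: (pickP (fun g => P g && agree g g2)) => [g0 /andP [Pg0 a0]|none].
  rewrite (big_pred1 g0) // => g /=; apply/andP/eqP => [[Pg ag]|->]; last by [].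
  apply: uniq => // e eS.
  move/forallP: ag => /(_ e); move/forallP: a0 => /(_ e); rewrite eS /=.
  by move=> /eqP <- /eqP.
rewrite big_pred0 //; apply: prodr_ge0 => e _; exact: w_ge0.
Qed.
End Prob.
Section QsFacts.
Variables (s l : nat) (Qs : 'M[rat]_s).
Hypothesis l0 : (0 < l)%N.
Hypothesis orth : Qs^T *m Qs = 1%:M.
Hypothesis lev : int_mx (l%:R *: Qs).
Hypothesis hnz : forall i j, Qs i j = 0 \/ Qs i j \isn't a Num.int.

Lemma col_norm k : \sum_i Qs i k ^+ 2 = 1.
Proof.
have := congr1 (fun M : 'M[rat]_s => M k k) orth; rewrite !mxE eqxx mulr1n => <-.
by apply: eq_bigr => i _; rewrite !mxE expr2.
Qed.

Lemma row_norm j : \sum_k Qs j k ^+ 2 = 1.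
Proof.
have := congr1 (fun M : 'M[rat]_s => M j j) (mulmx1C orth); rewrite !mxE eqxx mulr1n => <-.
by apply: eq_bigr => i _; rewrite !mxE expr2.
Qed.

Lemma entry_sq_le1 i k : Qs i k ^+ 2 <= 1.
Proof.
rewrite -(col_norm k) (bigD1 i) //= lerDl; apply: sumr_ge0 => j _; exact: sqr_ge0.
Qed.

Lemma nz_nonint i k : Qs i k != 0 -> Qs i k \isn't a Num.int.
Proof. by case: (hnz i k) => [->|//]; rewrite eqxx. Qed.

Lemma nz_lt1 i k : Qs i k != 0 -> `|Qs i k| < 1.
Proof.
move=> nz; have := entry_sq_le1 i k; set q := Qs i k => h.
have ni := nz_nonint nz; rewrite -/q in ni.
have n1 : q != 1 by apply: contraNneq ni => ->; rewrite rpred1.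
have n2 : q != -1 by apply: contraNneq ni => ->; rewrite rpredN rpred1.
have hb : -1 <= q <= 1 by apply/andP; split; nra.
rewrite ltr_norml; case/andP: hb => h1 h2.
by rewrite !lt_neqAle h1 h2 n1 eq_sym n2.
Qed.

Lemma lev_int i k : l%:R * Qs i k \is a Num.int.
Proof. by move/forallP: lev => /(_ i) /forallP /(_ k); rewrite mxE. Qed.

Lemma supp_le (v : 'I_s -> rat) : \sum_i v i ^+ 2 = 1 ->
  (forall i, l%:R * v i \is a Num.int) -> (#|[set i | (v i != 0)%R]| <= l ^ 2)%N.
Proof.
move=> n1 vi; rewrite -(ler_nat rat) natrX.
have -> : (l%:R ^+ 2 : rat) = \sum_i (l%:R * v i) ^+ 2.
  by rewrite -[LHS]mulr1 -n1 mulr_sumr; apply: eq_bigr => i _; rewrite exprMn.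
rewrite [X in _ <= X](bigID (fun i => v i != 0)) /= -[X in X <= _]addr0.
apply: lerD; last by apply: sumr_ge0 => i _; exact: sqr_ge0.
rewrite -sum1_card natr_sum [X in X <= _](eq_bigl (fun i => v i != 0)); last by move=> i; rewrite inE.
apply: ler_sum => i nz.
have h1 : 1 <= `|l%:R * v i| by apply: norm_intr_ge1 => //; rewrite mulf_neq0 // pnatr_eq0 -lt0n.
by rewrite -real_normK ?num_real // exprn_ege1.
Qed.

Lemma col_supp k : (#|[set i | (Qs i k != 0)%R]| <= l ^ 2)%N.
Proof. exact: (supp_le (v := fun i => Qs i k) (col_norm k) (fun i => lev_int i k)). Qed.

Lemma row_supp j : (#|[set k | (Qs j k != 0)%R]| <= l ^ 2)%N.
Proof. exact: (supp_le (v := fun k => Qs j k) (row_norm j) (fun k => lev_int j k)). Qed.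

Variable d : 'I_s * 'I_s.

Definition diagp (ps : seq ('I_s * 'I_s)) := forall a b, (a < size ps)%N -> (b < size ps)%N ->
  (Qs (nth d ps a).1 (nth d ps b).2 != 0) = (a == b).

Lemma greedy N (Rs : {set 'I_s}) : (#|Rs| <= N)%N ->
  exists ps, [/\ diagp ps, all (fun x => x.1 \in Rs) ps & (#|Rs| <= size ps * l ^ 4)%N].
Proof.
elim: N Rs => [|N IH] Rs hN.
  exists [::]; split; [by move=> a b | by [] | by move: hN; rewrite leqn0 => /eqP ->].
have [R0|/set0Pn [j jR]] := eqVneq Rs finset.set0.
  by exists [::]; split; [move=> a b | by [] | rewrite R0 cards0].
have [k nzk] : exists k, Qs j k != 0.
  case: (pickP (fun k => Qs j k != 0)) => [k nzk | allz]; first by exists k.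
  have := row_norm j; rewrite big1 => [/eqP|i _]; first by rewrite eq_sym oner_eq0.
  by have := allz i => /= /negbFE /eqP ->; rewrite expr0n.
set C := [set k' | Qs j k' != 0].
set Rs' := [set r in Rs | [forall k' in C, Qs r k' == 0]].
have jR' : j \notin Rs'.
  rewrite inE negb_and; apply/orP; right; rewrite negb_forall; apply/existsP; exists k.
  by rewrite inE nzk.
have sub : Rs' \subset Rs by apply/fintype.subsetP => r; rewrite inE => /andP [].
have lt : (#|Rs'| < #|Rs|)%N.
  by apply: proper_card; rewrite finset.properEneq sub andbT; apply: contraNneq jR' => ->.
have hN' : (#|Rs'| <= N)%N by rewrite -ltnS (leq_trans lt hN).
have [ps' [dg alR c']] := IH Rs' hN'.
have inR' : forall a, (a < size ps')%N -> (nth d ps' a).1 \in Rs'.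
  by move=> a ha; apply: (allP alR); rewrite mem_nth.
have nzd : forall a, (a < size ps')%N -> Qs (nth d ps' a).1 (nth d ps' a).2 != 0.
  by move=> a ha; rewrite dg // eqxx.
have zC : forall a k', (a < size ps')%N -> k' \in C -> Qs (nth d ps' a).1 k' = 0.
  move=> a k' ha kC; have := inR' a ha; rewrite inE => /andP [_ /forallP /(_ k')].
  by rewrite kC /= => /eqP.
exists ((j, k) :: ps'); split.
- move=> [|a] [|b] /= ha hb.
  + by rewrite nzk.
  + apply/negbTE; apply/negP => hC.
    have := nzd b hb; rewrite zC // ?eqxx // inE //.
  + by rewrite zC // ?eqxx // inE.
  + by rewrite dg.
- rewrite /= jR /=; apply/allP => x xin; have := allP alR x xin.
  by rewrite inE => /andP [].
- rewrite /= mulSn addnC -(cardsID Rs' Rs); apply: leq_add.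
    by apply: leq_trans c'; apply: subset_leq_card; apply: subsetIr.
  have sub2 : Rs :\: Rs' \subset \bigcup_(k' in C) [set i | Qs i k' != 0].
    apply/fintype.subsetP => r; rewrite !inE negb_and => /andP [/orP [/negP nr|nf] rR].
      by rewrite rR in nr.
    move: nf; rewrite negb_forall => /existsP [k' ]; rewrite negb_imply => /andP [kC nz].
    by apply/bigcupP; exists k' => //; rewrite inE.
  apply: (leq_trans (subset_leq_card sub2)); apply: (leq_trans (unstable.card_big_setU _ _ _)).
apply: (leq_trans (n := \sum_(i in C) l ^ 2)); first by apply: leq_sum => i _; apply: col_supp.
  rewrite sum_nat_const (_ : 4 = 2 + 2)%N // expnD leq_mul2r row_supp orbT //.
Qed.
End QsFacts.
Lemma is_edge_val n (g : graph n) (e : vpair n) : is_edge g (val e).1 (val e).2 = g e.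
Proof.
rewrite /is_edge; have -> : ((val e).1, (val e).2) = val e by case: (val e).
by rewrite valK.
Qed.

Lemma is_edge_sym n (g : graph n) u w : is_edge g u w = is_edge g w u.
Proof.
rewrite /is_edge.
case: (insubP (vpair n) (u, w)) => [e1 h1 v1|h1];
case: (insubP (vpair n) (w, u)) => [e2 h2 v2|h2] //=.
by move: h1 h2 => /= h1 h2; have := ltn_trans h1 h2; rewrite ltnn.
Qed.

Lemma is_edge_diff n (g g' : graph n) u w : is_edge g u w != is_edge g' u w ->
  exists e : vpair n, g e != g' e /\ (val e = (u, w) \/ val e = (w, u)).
Proof.
rewrite /is_edge.
case: (insubP (vpair n) (u, w)) => [e1 h1 v1|h1].
  by move=> ne; exists e1; split => //; left.
case: (insubP (vpair n) (w, u)) => [e2 h2 v2|h2] //.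
by move=> ne; exists e2; split => //; right.
Qed.

Lemma lr_neq s m (i : 'I_s) (v : 'I_m) : lshift m i != rshift s v.
Proof. by apply/eqP => /(congr1 val) /= e; have := ltn_ord i; rewrite e ltnNge leq_addr. Qed.

Lemma nonint_mul (b1 b2 : bool) (c : rat) : c \isn't a Num.int ->
  ((b1%:R - b2%:R) * c \is a Num.int) -> b1 = b2.
Proof.
move=> nc; case: b1; case: b2 => //=; rewrite ?subr0 ?sub0r ?mul1r ?mulN1r ?rpredN.
  by rewrite (negbTE nc).
by rewrite (negbTE nc).
Qed.

Lemma nonint_prod (c1 c2 : rat) : c1 != 0 -> c2 != 0 -> `|c1| < 1 -> `|c2| < 1 ->
  c1 * c2 \isn't a Num.int.
Proof.
move=> n1 n2 l1 l2; apply/negP => hi.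
have := norm_intr_ge1 hi (mulf_neq0 n1 n2); rewrite normrM.
have : `|c1| * `|c2| < 1.
  have h0 : 0 <= `|c2| by [].
  by apply: (le_lt_trans (y := `|c2|)); [rewrite ler_piMl // ltW | ].
by move=> lt le; have := lt_le_trans lt le; rewrite ltxx.
Qed.
Definition ordp n (u w : 'I_n) : 'I_n * 'I_n := if (u < w)%N then (u, w) else (w, u).

Lemma ordp_eq n (u w u' w' : 'I_n) : ordp u w = ordp u' w' ->
  (u = u' /\ w = w') \/ (u = w' /\ w = u').
Proof.
rewrite /ordp; case: ifP => _; case: ifP => _ [-> ->]; by [left | right].
Qed.

Lemma ordp_lt n (u w : 'I_n) : u != w -> ((ordp u w).1 < (ordp u w).2)%N.
Proof.
move=> uw; rewrite /ordp; case: ifP => //= /negbT nlt.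
move: uw; rewrite -(inj_eq val_inj) /= => uw; lia.
Qed.

Section Main.
Variables (s m l : nat) (Qs : 'M[rat]_s) (d : 'I_s * 'I_s) (ps : seq ('I_s * 'I_s)).
Hypothesis dg : diagp Qs d ps.

Let T := size ps.
Let h := T./2.
Let J a := (nth d ps a).1.
Let K a := (nth d ps a).2.
Let lJ a : 'I_(s + m) := lshift m (J a).

Lemma Jinj a b : (a < T)%N -> (b < T)%N -> J a = J b -> a = b.
Proof.
move=> ha hb e; have := dg ha ha; rewrite eqxx; rewrite -/(J a) e /J dg //.
by move=> /eqP.
Qed.

Lemma hT (b : 'I_(T - h)) : (h + b < T)%N.
Proof. by have := ltn_ord b; rewrite ltn_subRL. Qed.

Lemma hT' (a : 'I_h) : (a < T)%N.
Proof. have := ltn_ord a; move: (a : nat) => a0; rewrite /h -divn2; lia. Qed.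

Definition kp (u w : 'I_(s + m)) : bool :=
  [exists a : 'I_h, exists b : 'I_(T - h), (u == lJ a) && (w == lJ (h + b))] ||
  [exists a : 'I_T, exists v : 'I_m, (u == lJ a) && (w == rshift s v)].
Definition keyP u w := kp u w || kp w u.
Definition S : {set vpair (s + m)} := [set e | keyP (val e).1 (val e).2].

Definition F (i : ('I_h * 'I_(T - h)) + ('I_T * 'I_m)) : 'I_(s + m) * 'I_(s + m) :=
  match i with
  | inl (a, b) => ordp (lJ a) (lJ (h + b))
  | inr (a, v) => (lJ a, rshift s v)
  end.

Lemma lJ_inj a b : (a < T)%N -> (b < T)%N -> lJ a = lJ b -> a = b.
Proof. by move=> ha hb /lshift_inj; apply: Jinj. Qed.

Lemma lJ_neq (a : 'I_h) (b : 'I_(T - h)) : lJ a != lJ (h + b).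
Proof.
apply/eqP => /(lJ_inj (hT' a) (hT b)) e; have := ltn_ord a; rewrite e.
by rewrite ltnNge leq_addr.
Qed.

Lemma F_lt i : ((F i).1 < (F i).2)%N.
Proof.
case: i => [[a b]|[a v]] /=; first by apply: ordp_lt; apply: lJ_neq.
by rewrite /= (leq_trans (ltn_ord _)) // leq_addr.
Qed.

Lemma F_key i : keyP (F i).1 (F i).2.
Proof.
case: i => [[a b]|[a v]] /=.
  rewrite /ordp; case: ifP => _ /=; rewrite /keyP /kp; apply/orP; [left|right];
  apply/orP; left; apply/existsP; exists a; apply/existsP; exists b; by rewrite !eqxx.
rewrite /keyP /kp; apply/orP; left; apply/orP; right.
by apply/existsP; exists a; apply/existsP; exists v; rewrite !eqxx.
Qed.

Lemma F_inj : injective F.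
Proof.
case=> [[a1 b1]|[a1 v1]] [[a2 b2]|[a2 v2]] /=.
- move/ordp_eq => [[/(lJ_inj (hT' a1) (hT' a2)) e1 /(lJ_inj (hT b1) (hT b2)) e2]|[e1 _]].
    by congr (inl (_, _)); apply: val_inj => //=; move/eqP: e2; rewrite eqn_add2l => /eqP.
  move/(lJ_inj (hT' a1) (hT b2)): e1 => e1; have := ltn_ord a1; rewrite e1.
  by rewrite ltnNge leq_addr.
- rewrite /ordp; case: ifP => _ [_ /eqP /= /eqP e];
  have := ltn_ord (J (h + b1)); have := ltn_ord (J a1); lia.
- rewrite /ordp; case: ifP => _ [_ /eqP /= /eqP e];
  have := ltn_ord (J (h + b2)); have := ltn_ord (J a2); lia.
- move=> [e1 e2]; have e3 := Jinj (ltn_ord a1) (ltn_ord a2) (val_inj e1).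
  have e4 : v1 = v2 by apply: val_inj => /=; lia.
  by congr (inr (_, _)); [apply: val_inj|].
Qed.

Lemma cardS : (h * (T - h) + T * m <= #|S|)%N.
Proof.
have -> : (h * (T - h) + T * m = #|[set F i | i in [set: ('I_h * 'I_(T - h)) + ('I_T * 'I_m)]]|)%N.
  rewrite card_imset; last exact: F_inj.
  by rewrite cardsT card_sum !card_prod !card_ord.
rewrite -(card_imset _ val_inj); apply: subset_leq_card.
apply/fintype.subsetP => x /imsetP [i _ ->].
apply/imsetP; exists (Sub (F i) (F_lt i)); last by rewrite SubK.
by rewrite inE SubK F_key.
Qed.

Hypothesis orth : Qs^T *m Qs = 1%:M.
Hypothesis hnz : forall i j, Qs i j = 0 \/ Qs i j \isn't a Num.int.

Lemma blk (D : 'M[rat]_(s + m)) :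
  (block_mx Qs 0 0 1%:M)^T *m D *m block_mx Qs 0 0 1%:M =
  block_mx (Qs^T *m ulsubmx D *m Qs) (Qs^T *m ursubmx D) (dlsubmx D *m Qs) (drsubmx D).
Proof.
rewrite -{1}(submxK D) tr_block_mx !trmx0 trmx1 !mulmx_block.
by rewrite !(mul0mx, mulmx0, addr0, add0r, mulmx1, mul1mx).
Qed.

Lemma diagJK a b : (a < T)%N -> (b < T)%N -> (Qs (J a) (K b) != 0) = (a == b).
Proof. exact: dg. Qed.

Lemma unique (g g' : graph (s + m)) :
  int_mx ((block_mx Qs 0 0 1%:M)^T *m adj_mx g *m block_mx Qs 0 0 1%:M) ->
  int_mx ((block_mx Qs 0 0 1%:M)^T *m adj_mx g' *m block_mx Qs 0 0 1%:M) ->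
  (forall e, e \notin S -> g e = g' e) -> g = g'.
Proof.
move=> Eg Eg' ag.
set D := adj_mx g - adj_mx g'.
have Mint : forall i j, ((block_mx Qs 0 0 1%:M)^T *m D *m block_mx Qs 0 0 1%:M) i j \is a Num.int.
  move=> i j; rewrite /D mulmxBr mulmxBl mxE [X in _ + X]mxE; apply: rpredB.
    by move/forallP: Eg => /(_ i) /forallP /(_ j).
  by move/forallP: Eg' => /(_ i) /forallP /(_ j).
rewrite blk in Mint.
have DE : forall u w, D u w = (is_edge g u w)%:R - (is_edge g' u w)%:R by move=> u w; rewrite !mxE.
have Dsupp : forall u w, D u w != 0 -> keyP u w.
  move=> u w; rewrite DE; case: (eqVneq (is_edge g u w) (is_edge g' u w)) => [->|ne].
    by rewrite subrr eqxx.
  move=> _; have [e [gne [ve|ve]]] := is_edge_diff ne.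
    have : e \in S by apply: contraNT gne => eS; rewrite ag.
    by rewrite inE ve.
  have : e \in S by apply: contraNT gne => eS; rewrite ag.
  by rewrite inE ve /keyP orbC.
have E1 : forall (a : 'I_T) (v : 'I_m), is_edge g (rshift s v) (lJ a) = is_edge g' (rshift s v) (lJ a).
  move=> a v; have := Mint (rshift s v) (lshift m (K a)).
  rewrite block_mxEdl mxE (bigD1 (J a)) //= big1 ?addr0; last first.
    move=> j nj; rewrite 2!mxE.
    case: (eqVneq (D (rshift s v) (lshift m j)) 0) => [->|nz]; first by rewrite mul0r.
    have lrF : forall (v' : 'I_m) a', (rshift s v' == lJ a') = false.
      by move=> v' a'; rewrite eq_sym (negbTE (lr_neq _ _)).
    have := Dsupp _ _ nz; rewrite /keyP /kp.
    case/orP => /orP [/existsP [a1 /existsP [b1 /andP [e1 e2]]] | /existsP [a1 /existsP [v1 /andP [e1 e2]]]];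
      rewrite ?lrF // in e1 e2.
    move/eqP/lshift_inj: e1 => e1; subst j.
    have : a1 != a :> nat by apply: contraNneq nj => ->.
    by rewrite -diagJK // negbK => /eqP ->; rewrite mulr0.
  rewrite 2!mxE DE; apply: nonint_mul; apply: nz_nonint => //.
  by rewrite diagJK.
have lrF : forall (v' : 'I_m) j, (lshift m j == rshift s v') = false.
  by move=> v' j; rewrite (negbTE (lr_neq _ _)).
have E2 : forall (a : 'I_h) (b : 'I_(T - h)), is_edge g (lJ a) (lJ (h + b)) = is_edge g' (lJ a) (lJ (h + b)).
  move=> a b; have ha := hT' a; have hb := hT b.
  have key : forall j j', Qs j (K a) != 0 -> D (lshift m j) (lshift m j') != 0 ->
      Qs j' (K (h + b)) != 0 -> j = J a /\ j' = J (h + b).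
    move=> j j' n1 n2 n3; have := Dsupp _ _ n2; rewrite /keyP /kp.
    case/orP => /orP [/existsP [a1 /existsP [b1 /andP [e1 e2]]] | /existsP [a1 /existsP [v1 /andP [e1 e2]]]];
      rewrite ?lrF // in e1 e2.
      move/eqP/lshift_inj: e1 => e1; move/eqP/lshift_inj: e2 => e2; subst j j'.
      move: n1 n3; rewrite !diagJK // ?hT' ?hT // => /eqP -> /eqP ->; by split.
    move/eqP/lshift_inj: e2 => e2; subst j.
    move: n1; rewrite diagJK // ?hT // => /eqP e; have := ltn_ord a; rewrite -e.
    by rewrite ltnNge leq_addr.
  have := Mint (lshift m (K a)) (lshift m (K (h + b))).
  rewrite block_mxEul mxE (bigD1 (J (h + b))) //= big1 ?addr0; last first.
    move=> j' nj'; case: (eqVneq (Qs j' (K (h + b))) 0) => [->|n3]; first by rewrite mulr0.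
    rewrite mxE big1 ?mul0r // => j _; rewrite !mxE -DE.
    case: (eqVneq (Qs j (K a)) 0) => [->|n1]; first by rewrite mul0r.
    case: (eqVneq (D (lshift m j) (lshift m j')) 0) => [->|n2]; first by rewrite mulr0.
    by have [_ e] := key _ _ n1 n2 n3; rewrite e eqxx in nj'.
  rewrite mxE (bigD1 (J a)) //= big1 ?addr0; last first.
    move=> j nj; rewrite !mxE -DE.
    case: (eqVneq (Qs j (K a)) 0) => [->|n1]; first by rewrite mul0r.
    case: (eqVneq (D (lshift m j) (lshift m (J (h + b)))) 0) => [->|n2]; first by rewrite mulr0.
    have n3 : Qs (J (h + b)) (K (h + b)) != 0 by rewrite diagJK.
    by have [e _] := key _ _ n1 n2 n3; rewrite e eqxx in nj.
  rewrite !mxE -DE mulrAC mulrC DE; apply: nonint_mul.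
  have n1 : Qs (J a) (K a) != 0 by rewrite diagJK.
  have n3 : Qs (J (h + b)) (K (h + b)) != 0 by rewrite diagJK.
  by apply: nonint_prod => //; apply: nz_lt1.
apply/ffunP => e; case: (boolP (e \in S)) => eS; last exact: ag.
move: eS; rewrite inE -(is_edge_val g) -(is_edge_val g').
case: (val e) => u w /=; rewrite /keyP /kp.
case/orP => /orP [/existsP [a1 /existsP [b1 /andP [/eqP -> /eqP ->]]] | /existsP [a1 /existsP [v1 /andP [/eqP -> /eqP ->]]]].
- exact: E2.
- by rewrite is_edge_sym [RHS]is_edge_sym; apply: E1.
- by rewrite is_edge_sym [RHS]is_edge_sym; apply: E2.
- exact: E1.
Qed.
End Main.
Unset Implicit Arguments.
Lemma real_ineq (R : realType) (x hr k t mr : R) : 0 <= x -> 0 <= hr -> 0 <= mr ->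
  t = hr + k -> (k = hr \/ k = hr + 1) -> 2 * x <= t -> x * (x + mr - 1) <= hr * k + t * mr.
Proof.
move=> x0 h0 m0 -> [] -> le.
  have xh : x <= hr by lra.
  have : x * mr <= (hr + hr) * mr by nra.
  nra.
have xh : x <= hr + 1 / 2 by lra.
have : x * mr <= (hr + (hr + 1)) * mr by nra.
have : 0 <= (hr + 1 - x) * (hr + x) by nra.
nra.
Qed.

Theorem mainTheorem2 (R : realType) (s m l : nat) (Qs : 'M[rat]_s) (p : R) :
  (1 <= s)%N -> (1 <= l)%N ->
  rat_orthogonal Qs -> is_level Qs l ->
  (forall i j, Qs i j = 0 \/ Qs i j \isn't a Num.int) ->
  0 < p < 1 ->
  let Q : 'M[rat]_(s + m) := block_mx Qs 0 0 1%:M in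
  let x : R := s%:R / (2 * (l ^ 4)%N%:R) in
  gnp_prob p (fun g : graph (s + m) => int_mx (Q^T *m adj_mx g *m Q))
  <= (Num.max p (1 - p)) `^ (x * (x + m%:R - 1)).
Proof.
move=> hs hl orth hlev hnz hp; cbv zeta; set x := (s%:R / _ : R).
move: hlev; rewrite /is_level => -[l0 [lev _]].
case/andP: hp => p0 p1.
pose j0 : 'I_s := Ordinal hs.
have cs : (#|[set: 'I_s]| <= s)%N by rewrite cardsT card_ord.
have [ps [dg _ cT]] := greedy l0 orth lev (j0, j0) cs.
rewrite cardsT card_ord in cT.
set q := Num.max p (1 - p).
have q0 : 0 < q by rewrite lt_max p0.
have q1 : q <= 1 by rewrite ge_max; apply/andP; split; lra.
have p01 : 0 <= p <= 1 by apply/andP; split; lra.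
apply: (le_trans (prob_unique p01 (unique dg orth hnz))).
set T := size ps.
set h := T./2.
apply: (le_trans (y := q ^+ (h * (T - h) + T * m))).
  apply: ler_wiXn2l; [exact: (ltW q0) | exact: q1 | exact: (cardS m dg)].

have hq : 0 < q <= 1 by rewrite q0 q1.
rewrite -powR_mulrn; last exact: (ltW q0).
move: (ger_powR hq) => H; apply: H.
rewrite natrD !natrM.
have eT : T = (h + (T - h))%N by rewrite /h -divn2; lia.
have ek : (T - h = h \/ T - h = h.+1)%N by rewrite /h -divn2; lia.
apply: real_ineq.
- by rewrite /x divr_ge0 // mulr_ge0.
- by [].
- by [].
- by rewrite {1}eT natrD.
- by case: ek => ->; [left | right; rewrite -addn1 natrD].
- have L0 : (0 : R) < (l ^ 4)%N%:R by rewrite ltr0n expn_gt0 l0.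
  have -> : 2 * x = s%:R / (l ^ 4)%N%:R.
    by rewrite /x; field; rewrite pnatr_eq0 -lt0n.
  by rewrite ler_pdivrMr // -natrM ler_nat.
Qed.
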